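(* Let $\mathcal{P}=((v_1,\dots,v_p),(v'_0,\dots,v'_{p+1}))$ be a dangerous caterpillar structure for an assignment $(x,y)$. Let $i$ be an index with $v_i\in\Gamma(\mathcal{P})$ and $L(v_i)=\min_{v\in\Gamma(\mathcal{P})}L(v)$, and let $j\in\{0,\dots,p+1\}$ be an index with $v'_j\ne\mathrm{nil}$ and $L(v'_j)>L(v_i)$. Then for every $a$ with $1\le a\le p$ and $\min(i,j)\le a\le\max(i,j)$ we have $L(v_a)\ge L(v_i)$.
   Context: $G=(V,E)$ undirected unweighted, $\mathrm{dist}_G$ shortest-path distance, $L:V\to\mathbb{N}$. An assignment is $x:V\times V\to\mathbb{R}_{\ge0}$, $y:V\to\mathbb{R}_{\ge0}$. A $\delta$-caterpillar structure for $(x,y)$ is a sequence of distinct vertices $P=(v_1,\dots,v_p)$ with a sequence $P'=(v'_0,\dots,v'_{p+1})$ such that: (i) $y_{v_i}=1$ for $i=1..p$; (ii) $\mathrm{dist}_G(v_i,v_{i+1})\le\delta$ for $i=1..p-1$; (iii) each $v'_i$ is $\mathrm{nil}$ or a vertex not in $\{v_1,\dots,v_p\}$; (iv) for $1\le i\le p$, if $v'_i\ne\mathrm{nil}$ then $L(v_i)\ge L(v'_i)$, $0<y_{v'_i}<1$, $\mathrm{dist}_G(v_i,v'_i)\le\delta$; (v) if $v'_0\ne\mathrm{nil}$ then $\mathrm{dist}_G(v'_0,v_1)\le\delta$ and $0<y_{v'_0}<1$; (vi) if $v'_{p+1}\ne\mathrm{nil}$ then $\mathrm{dist}_G(v'_{p+1},v_p)\le\delta$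 and $0<y_{v'_{p+1}}<1$; (vii) non-nil entries of $P'$ are pairwise distinct; (viii) $\sum_{v\in V(P')}y_v$ is an integer, where $V(P')$ is the set of non-nil entries. For such $\mathcal{P}$, $\Gamma(\mathcal{P})$ is the set of $v_i$ ($1\le i\le p$) for which there exist $0\le i_0<i<i_1\le p+1$ with $v'_{i_0}\ne\mathrm{nil}$, $L(v'_{i_0})>L(v_i)$, $v'_{i_1}\ne\mathrm{nil}$, $L(v'_{i_1})>L(v_i)$. $\mathcal{P}$ is safe if $\Gamma(\mathcal{P})=\emptyset$ and dangerous otherwise. *)

(* Defs.v *)
From HB Require Import structures.
From mathcomp Require Import all_boot all_order all_algebra.
Set Implicit Arguments. Unset Strict Implicit. Unset Printing Implicit Defensive.
Import Order.TTheory GRing.Theory Num.Theory.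
Local Open Scope ring_scope.

Definition simple_graph (V : finType) (e : rel V) : Prop :=
  symmetric e /\ irreflexive e.

Definition dist_le (V : finType) (e : rel V) (u w : V) (d : nat) : Prop :=
  exists s : seq V, [/\ path e u s, last u s = w & (size s <= d)%N].

Definition assignment (R : realFieldType) (V : finType)
  (x : V -> V -> R) (y : V -> R) : Prop :=
  (forall u w, 0 <= x u w) /\ (forall u, 0 <= y u).

(* A delta-caterpillar structure: P = (v 1, ..., v p), P' = (v' 0, ..., v' (p+1)),
   with None encoding nil. *)
Definition caterpillar (R : realFieldType) (V : finType) (e : rel V) (L : V -> nat)
  (y : V -> R) (delta : nat) (p : nat) (v : nat -> V) (v' : nat -> option V) : Prop :=
  (forall i j, (1 <= i <= p)%N -> (1 <= j <= p)%N -> v i = v j -> i = j) /\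
  (forall i, (1 <= i <= p)%N -> y (v i) = 1) /\
  (forall i, (1 <= i)%N -> (i < p)%N -> dist_le e (v i) (v i.+1) delta) /\
  (forall i w, (i <= p.+1)%N -> v' i = Some w ->
     forall k, (1 <= k <= p)%N -> w <> v k) /\
  (forall i w, (1 <= i <= p)%N -> v' i = Some w ->
     [/\ (L w <= L (v i))%N, 0 < y w, y w < 1 & dist_le e (v i) w delta]) /\
  (forall w, v' 0%N = Some w -> dist_le e w (v 1%N) delta /\ 0 < y w /\ y w < 1) /\
  (forall w, v' p.+1 = Some w -> dist_le e w (v p) delta /\ 0 < y w /\ y w < 1) /\
  (forall i j w, (i <= p.+1)%N -> (j <= p.+1)%N -> v' i = Some w -> v' j = Some w -> i = j) /\
  (exists z : int,
     \sum_(u in [set u : V | [exists k : 'I_p.+2, v' k == Some u]]) y u = z%:~R).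

Definition Gamma_index (V : finType) (L : V -> nat) (p : nat)
  (v : nat -> V) (v' : nat -> option V) (i : nat) : Prop :=
  (1 <= i <= p)%N /\
  exists i0 i1 w0 w1, (i0 < i)%N /\ (i < i1)%N /\ (i1 <= p.+1)%N /\
     v' i0 = Some w0 /\ (L (v i) < L w0)%N /\ v' i1 = Some w1 /\ (L (v i) < L w1)%N.

Definition Gamma (V : finType) (L : V -> nat) (p : nat)
  (v : nat -> V) (v' : nat -> option V) (u : V) : Prop :=
  exists i, Gamma_index L p v v' i /\ u = v i.

Definition dangerous (V : finType) (L : V -> nat) (p : nat)
  (v : nat -> V) (v' : nat -> option V) : Prop :=
  exists u, Gamma L p v v' u.

(* Main.v *)
Require Import Defs.
From HB Require Import structures.
From mathcomp Require Import all_boot all_order all_algebra.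
From mathcomp Require Import zify.

Theorem mainTheorem13 (R : realFieldType) (V : finType) (e : rel V)
  (L : V -> nat) (x : V -> V -> R) (y : V -> R) (delta p : nat)
  (v : nat -> V) (v' : nat -> option V) (i j : nat) (w : V) :
  simple_graph e ->
  assignment x y ->
  caterpillar e L y delta p v v' ->
  dangerous L p v v' ->
  (1 <= i <= p)%N ->
  Gamma L p v v' (v i) ->
  (forall u, Gamma L p v v' u -> (L (v i) <= L u)%N) ->
  (j <= p.+1)%N ->
  v' j = Some w ->
  (L (v i) < L w)%N ->
  forall a, (1 <= a <= p)%N -> (minn i j <= a <= maxn i j)%N ->
  (L (v i) <= L (v a))%N.
Proof.
move=> _ _ [Hd [_ [_ [_ [Hiv _]]]]] _ Hi [k [[Hk [i0 [i1 [w0 [w1 [h1 [h2 [h3 [h4 [h5 [h6 h7]]]]]]]]]]] Hvk]] Hmin Hj Hvj HLw a Ha Hab.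
have Eki : k = i by apply: Hd => //; rewrite Hvk.
subst k.
rewrite leqNgt; apply/negP => Hlt.
have Haj : a <> j.
  move=> E.
  have [|Hle _ _ _] := Hiv a w Ha _; first by rewrite E. lia.
have Hai : a <> i by move=> E; move: Hlt; rewrite E ltnn.
have : (L (v i) <= L (v a))%N; last lia.
apply: Hmin; exists a; split => //; split => //.
case: (ltnP j i) => Hji.
- exists j, i1, w, w1; do 6 (split; first by lia || done); lia.
- exists i0, j, w0, w; do 6 (split; first by lia || done); lia.
Qed.
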